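(* Let $p=2m\ge 4$ be even and let $U$ be the graph obtained from the cycle $C_p$ (vertices $v_1,\dots,v_p$) by attaching a single pendant vertex $u$ adjacent to $v_1$. Let $\tilde\Delta$ be the distance squared matrix of $C_p$ (equivalently, the principal submatrix of the distance squared matrix of $U$ indexed by $v_1,\dots,v_p$), and let $\mathbf x\in\mathbb R^p$ have entries $x_i=d_U(u,v_i)^2$. Then $\tilde\Delta$ is invertible and \[ \mathbf x^T\tilde\Delta^{-1}\mathbf x>0. \]
   Context: For a connected graph with vertices $1,\dots,n$, the distance squared matrix is the matrix with $(i,j)$ entry $d_{ij}^2$, where $d_{ij}$ is the graph distance between $i$ and $j$; $d_U$ denotes distance in $U$. *)

(* Defs.v *)
From HB Require Import structures.
From mathcomp Require Import all_boot all_order all_algebra.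
Set Implicit Arguments. Unset Strict Implicit. Unset Printing Implicit Defensive.
Import Order.TTheory GRing.Theory Num.Theory.

(* Shortest walks have < #|T| edges, so it
   suffices to search n in [0, #|T|); (#|T| is returned if y is unreachable,
   which never happens for the connected graphs used here). *)
Definition gdist (T : finType) (e : rel T) (x y : T) : nat :=
  find (fun n => [exists s : n.-tuple T, path e x s && (last x s == y)])
       (iota 0 #|T|).

(* The cycle C_p on vertices 'I_p (vertex i stands for v_{i+1}). *)
Definition cycle_rel (p : nat) : rel 'I_p :=
  fun i j => (i.+1 %% p == j) || (j.+1 %% p == i).

(* The unicyclic graph U: C_p plus a pendant vertex u (= None)
   adjacent to v_1 (= Some i with i = 0). *)
Definition U_rel (p : nat) : rel (option 'I_p) :=
  fun a b => match a, b with
             | Some i, Some j => cycle_rel i j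
             | None, Some j => val j == 0%N
             | Some i, None => val i == 0%N
             | None, None => false
             end.

Local Open Scope ring_scope.

Definition DeltaC (R : ringType) (p : nat) : 'M[R]_p :=
  \matrix_(i, j) ((gdist (@cycle_rel p) i j) ^ 2)%N%:R.

Definition xU (R : ringType) (p : nat) : 'cV[R]_p :=
  \col_i ((gdist (@U_rel p) None (Some i)) ^ 2)%N%:R.

(* Main.v *)
Set Warnings "-notation-overridden,-ambiguous-paths,-deprecated".
Require Import Defs.
From HB Require Import structures.
From mathcomp Require Import all_boot all_order all_algebra.
From mathcomp Require Import zify ring lra.
Import Order.TTheory GRing.Theory Num.Theory.
Set Implicit Arguments. Unset Strict Implicit. Unset Printing Implicit Defensive.

Inductive W (T : Type) (e : rel T) : nat -> T -> T -> Prop :=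
| W0 x : W e 0 x x
| WS n x y z : e x y -> W e n y z -> W e n.+1 x z.

Lemma W_snoc T (e : rel T) n x y z : W e n x y -> e y z -> W e n.+1 x z.
Proof.
elim=> [a|k a b c eab _ IH] h; first exact: WS h (W0 _ _).
exact: WS eab (IH h).
Qed.

Lemma W_cat T (e : rel T) n k x y z : W e n x y -> W e k y z -> W e (n + k) x z.
Proof.
elim=> [a|j a b c eab _ IH] h //.
rewrite addSn; exact: WS eab (IH h).
Qed.

Lemma W_sym T (e : rel T) n x y : (forall a b, e a b -> e b a) -> W e n x y -> W e n y x.
Proof.
move=> hs; elim=> [a|j a b c eab _ IH]; first exact: W0.
exact: W_snoc IH (hs _ _ eab).
Qed.

Lemma W_tuple (T : finType) (e : rel T) n x y : W e n x y ->
  [exists s : n.-tuple T, path e x s && (last x s == y)].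
Proof.
elim=> [a|k a b c eab _ IH].
  by apply/existsP; exists [tuple]; rewrite /= eqxx.
case/existsP: IH => s /andP[ps ls].
apply/existsP; exists [tuple of b :: s]; by rewrite /= eab ps ls.
Qed.

Lemma path_bound T (e : rel T) (phi : T -> nat) :
  (forall a b, e a b -> (phi b <= (phi a).+1)%N) ->
  forall s x, path e x s -> (phi (last x s) <= phi x + size s)%N.
Proof.
move=> H; elim=> [|a s IH] x /=; first by rewrite addn0.
case/andP => h1 h2; have := IH a h2; have := H x a h1; lia.
Qed.

Lemma gdist_eq (T : finType) (e : rel T) x y n (phi : T -> nat) :
  (n < #|T|)%N -> W e n x y -> phi x = 0%N -> phi y = n ->
  (forall a b, e a b -> (phi b <= (phi a).+1)%N) -> gdist e x y = n.
Proof.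
move=> hn hw h0 hy hl; rewrite /gdist.
have -> : iota 0 #|T| = iota 0 n ++ iota n (#|T| - n) by rewrite -iotaD subnKC // ltnW.
rewrite find_cat size_iota.
rewrite ifF; last first.
  apply/hasP => -[k]; rewrite mem_iota add0n => /andP[_ hk] /existsP[s /andP[ps /eqP ls]].
  have := path_bound hl ps; rewrite ls hy h0 size_tuple; lia.
have -> : iota n (#|T| - n) = n :: iota n.+1 (#|T| - n).-1.
  by case E: (#|T| - n)%N => [|r]; [lia | done].
by rewrite /= (W_tuple hw) addn0.
Qed.

Definition cd p (i j : nat) := minn (maxn i j - minn i j) (p - (maxn i j - minn i j)).

Lemma succ_mod p (i : 'I_p) : i.+1 %% p = if i.+1 == p then 0%N else i.+1.
Proof.
case: eqP => [->|h]; first by rewrite modnn.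
rewrite modn_small //; have := ltn_ord i; lia.
Qed.

Lemma cyc_edge p (a b : 'I_p) : cycle_rel a b ->
  (nat_of_ord b = a.+1) \/ (a.+1 = p /\ nat_of_ord b = 0%N) \/ (nat_of_ord a = b.+1) \/ (b.+1 = p /\ nat_of_ord a = 0%N).
Proof.
rewrite /cycle_rel !succ_mod.
by case/orP; case: ifP => /eqP h1 /eqP h2; lia.
Qed.

Lemma cyc_sym p (a b : 'I_p) : cycle_rel a b -> cycle_rel b a.
Proof. by rewrite /cycle_rel orbC. Qed.

Lemma cd_lip p (i : nat) (a b : 'I_p) : (i < p)%N -> cycle_rel a b -> (cd p i b <= (cd p i a).+1)%N.
Proof.
move=> hi /cyc_edge h; have := ltn_ord a; have := ltn_ord b; rewrite /cd; lia.
Qed.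

Lemma cd_sym p i j : cd p i j = cd p j i.
Proof. by rewrite /cd (maxnC i j) (minnC i j). Qed.

Lemma W_fwd p k (a b : 'I_p) : nat_of_ord b = (a + k)%N -> W (@cycle_rel p) k a b.
Proof.
elim: k b => [|k IH] b hb.
  have -> : b = a by apply: val_inj => /=; rewrite hb addn0.
  exact: W0.
have hk : (a + k < p)%N by have := ltn_ord b; lia.
apply: (W_snoc (IH (Ordinal hk) erefl)).
rewrite /cycle_rel /=; apply/orP; left; apply/eqP.
rewrite modn_small; have := ltn_ord b; lia.
Qed.

Lemma W_cd p (i j : 'I_p) : W (@cycle_rel p) (cd p i j) i j.
Proof.
wlog hij : i j / (i <= j)%N.
  move=> H; case: (leqP i j) => h; first exact: H.
  rewrite cd_sym; apply: W_sym; first exact: cyc_sym.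
  by apply: H; apply: ltnW.
have hp : (0 < p)%N by have := ltn_ord i; lia.
case: (leqP (j - i) (p - (j - i))) => h.
  have -> : cd p i j = (j - i)%N by rewrite /cd; lia.
  apply: W_fwd; lia.
have hl : (p.-1 < p)%N by lia.
have -> : cd p i j = ((p.-1 - j).+1 + i)%N by rewrite /cd; have := ltn_ord j; lia.
apply: W_sym; first exact: cyc_sym.
apply: (@W_cat _ _ _ _ _ (Ordinal hp)).
  apply: (@W_snoc _ _ _ _ (Ordinal hl)).
    apply: W_fwd => /=; have := ltn_ord j; lia.
  rewrite /cycle_rel /= prednK // modnn //.
by apply: W_fwd.
Qed.

Lemma gdist_cycle p (i j : 'I_p) : gdist (@cycle_rel p) i j = cd p i j.
Proof.
apply: (@gdist_eq _ _ _ _ _ (fun k : 'I_p => cd p i k)).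
- rewrite card_ord /cd; have := ltn_ord i; have := ltn_ord j; lia.
- exact: W_cd.
- rewrite /cd; lia.
- done.
- move=> a b; apply: cd_lip; exact: ltn_ord.
Qed.

Lemma W_lift p n (a b : 'I_p) : W (@cycle_rel p) n a b -> W (@U_rel p) n (Some a) (Some b).
Proof.
elim=> [x|k x y z exy _ IH]; first exact: W0.
by apply: (WS _ IH).
Qed.

Lemma gdist_U p (j : 'I_p) : gdist (@U_rel p) None (Some j) = (cd p 0 j).+1.
Proof.
have hp : (0 < p)%N by have := ltn_ord j; lia.
apply: (@gdist_eq _ _ _ _ _
   (fun o : option (ordinal p) => match o with None => 0%N | Some k => (cd p 0 k).+1 end)).
- rewrite card_option card_ord /cd; have := ltn_ord j; lia.
- apply: (@WS _ _ (cd p 0 j) None (Some (Ordinal hp)) (Some j)) => //.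
  exact: W_lift (W_cd (Ordinal hp) j).
- done.
- done.
- move=> [a|] [b|] //=.
  + move=> h; have := cd_lip hp h; lia.
  + move=> /eqP hb; rewrite /cd hb; lia.
Qed.

Local Open Scope ring_scope.

Lemma cd_ordS p (i k : 'I_p) : cd p (ordS i) (ordS k) = cd p i k.
Proof.
rewrite /= !succ_mod; have := ltn_ord i; have := ltn_ord k.
by case: ifP => /eqP h1; case: ifP => /eqP h2; rewrite /cd; lia.
Qed.

Lemma rowsum_const (R : nmodType) p (F : nat -> R) (i : 'I_p) :
  \sum_(k < p) F (cd p i k) = \sum_(k < p) F (cd p 0 k).
Proof.
move: {2}(nat_of_ord i) (erefl (nat_of_ord i)) => n; elim: n i => [|n IH] i hi.
  by apply: eq_bigr => k _; rewrite hi.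
have hn : (n < p)%N by have := ltn_ord i; lia.
have -> : i = ordS (Ordinal hn).
  apply: val_inj => /=; rewrite modn_small; have := ltn_ord i; lia.
rewrite -(IH (Ordinal hn)) //.
rewrite (reindex_inj (@ordS_inj p)).
by apply: eq_bigr => k _; rewrite cd_ordS.
Qed.

Definition antv m (j : nat) := if (j < m)%N then (j + m)%N else (j - m)%N.
Lemma antv_lt m (j : 'I_((2 * m)%N)) : (antv m j < (2 * m)%N)%N.
Proof. rewrite /antv; have := ltn_ord j; case: ifP => h; lia. Qed.
Definition ant m (j : 'I_((2 * m)%N)) : 'I_((2 * m)%N) := Ordinal (antv_lt j).

Lemma ant_val m (j : 'I_((2 * m)%N)) :
  ((j < m)%N /\ nat_of_ord (ant j) = (j + m)%N) \/ ((m <= j)%N /\ nat_of_ord (ant j) = (j - m)%N).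
Proof. rewrite /= /antv; case: ifP => h; lia. Qed.

Lemma predS_val p (c : 'I_p) :
  (nat_of_ord (ord_pred c) = c.-1 /\ (0 < c)%N) \/ (nat_of_ord (ord_pred c) = p.-1 /\ nat_of_ord c = 0%N).
Proof.
rewrite /=; have hcp := ltn_ord c; case: (posnP c) => hc.
  rewrite hc add0n modn_small; lia.
have -> : (c + p).-1 = (c.-1 + p)%N by lia.
rewrite modnDr modn_small; lia.
Qed.

Lemma S_val p (c : 'I_p) :
  (nat_of_ord (ordS c) = c.+1 /\ (c.+1 < p)%N) \/ (nat_of_ord (ordS c) = 0%N /\ c.+1 = p).
Proof.
rewrite /= succ_mod; have := ltn_ord c; case: ifP => /eqP h; lia.
Qed.

Lemma char_m m (j k : 'I_((2 * m)%N)) : (0 < m)%N ->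
  (cd ((2 * m)%N) k j == m) = (k == ant j).
Proof.
move=> hm; have := ant_val j; have := ltn_ord k; have := ltn_ord j => hj hk ha.
apply/eqP/eqP => [h|->].
  apply: val_inj; change (nat_of_ord k = nat_of_ord (ant j)); move: h; rewrite /cd; lia.
rewrite /cd; lia.
Qed.

Lemma char_m1 m (j k : 'I_((2 * m)%N)) : (2 <= m)%N ->
  (cd ((2 * m)%N) k j == m.-1) = (k == ord_pred (ant j)) || (k == ordS (ant j)).
Proof.
move=> hm; have := ant_val j; have := ltn_ord k; have := ltn_ord j => hj hk ha.
have := predS_val (ant j); have := S_val (ant j) => hb ha'.
apply/eqP/orP => [h|].
  move: h; rewrite /cd => h.
  have : nat_of_ord k = nat_of_ord (ord_pred (ant j)) \/ nat_of_ord k = nat_of_ord (ordS (ant j)) by lia.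
  by case=> e; [left|right]; apply/eqP; apply: val_inj.
case=> /eqP ->; rewrite /cd; lia.
Qed.

Lemma predS_neq m (c : 'I_((2 * m)%N)) : (2 <= m)%N -> ord_pred c != ordS c.
Proof.
move=> hm; apply/eqP => /(congr1 val) /= .
have := predS_val c; have := S_val c; have := ltn_ord c; rewrite /=; lia.
Qed.

Definition off p (i x : nat) := if (i <= x)%N then (x - i)%N else (x + p - i)%N.
Definition gg p (t : nat) := minn t (p - t).

Lemma off_spec p i x : ((i <= x)%N /\ off p i x = (x - i)%N) \/ ((x < i)%N /\ off p i x = (x + p - i)%N).
Proof. rewrite /off; case: leqP => h; lia. Qed.

Lemma cd_off p i x : (i < p)%N -> (x < p)%N -> cd p i x = gg p (off p i x).
Proof. move=> hi hx; have := off_spec p i x; rewrite /cd /gg; lia. Qed.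

Lemma off_S p i (c : 'I_p) : (i < p)%N ->
  ((off p i c).+1 < p /\ off p i (ordS c) = (off p i c).+1)%N \/
  ((off p i c).+1 = p /\ off p i (ordS c) = 0)%N.
Proof.
move=> hi; have := off_spec p i c; have := off_spec p i (ordS c); have := S_val c.
have := ltn_ord c; lia.
Qed.

Lemma off_P p i (c : 'I_p) : (i < p)%N ->
  (0 < off p i c /\ off p i (ord_pred c) = (off p i c).-1)%N \/
  (off p i c = 0 /\ off p i (ord_pred c) = p.-1)%N.
Proof.
move=> hi; have := off_spec p i c; have := off_spec p i (ord_pred c); have := predS_val c.
have := ltn_ord c; lia.
Qed.

Lemma off_ant m i (j : 'I_(2 * m)%N) : (i < 2 * m)%N ->
  (off (2 * m) i j < m /\ off (2 * m) i (ant j) = off (2 * m) i j + m)%N \/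
  (m <= off (2 * m) i j /\ off (2 * m) i (ant j) = off (2 * m) i j - m)%N.
Proof.
move=> hi; have := off_spec (2 * m) i j; have := off_spec (2 * m) i (ant j); have := ant_val j.
have := ltn_ord j; lia.
Qed.

Lemma key m (i j : 'I_(2 * m)%N) : (2 <= m)%N ->
  ((cd (2 * m) i (ord_pred (ant j)))^2 + (cd (2 * m) i (ordS (ant j)))^2 + 4 * m * (i == j)
   = 2 + 2 * (cd (2 * m) i (ant j))^2)%N.
Proof.
move=> hm; have hi := ltn_ord i.
rewrite !cd_off ?ltn_ord //.
have hP := off_P (ant j) hi; have hS := off_S (ant j) hi; have hA := off_ant j hi.
have hj := ltn_ord j.
have hE : (i == j) = (off (2 * m) i j == 0%N).
  apply/eqP/eqP => [->|]; first by rewrite /off leqnn subnn.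
  move=> h; apply: val_inj; move: h; have := off_spec (2 * m) i j; simpl; lia.
rewrite hE; move: hP hS hA.
set t := off _ i (ant j); set tp := off _ i (ord_pred _); set ts := off _ i (ordS _).
set s0 := off _ i j.
have : (s0 < 2 * m)%N by rewrite /s0 /off; case: ifP => h; lia.
move=> hs0 hP hS hA; clearbody t tp ts s0; clear hE.
have h2m : (2 * m = m + m)%N by lia.
case: hA => -[h1 h2].
  case: (posnP s0) => hs.
    have -> : gg (2 * m) tp = m.-1 by rewrite /gg; case: hP => -[h3 h4]; try split; lia.
    have -> : gg (2 * m) ts = m.-1 by rewrite /gg; case: hS => -[h3 h4]; lia.
    have -> : gg (2 * m) t = m by rewrite /gg; lia.
    have [k ->] : exists k, m = k.+1 by exists m.-1; lia.
    rewrite /=; ring.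
  case: hS => -[h5 h6].
    have [k [-> -> ->]] : exists k, [/\ gg (2 * m) tp = k.+2, gg (2 * m) ts = k & gg (2 * m) t = k.+1].
      exists (2 * m - t - 1)%N; rewrite /gg; case: hP => -[h3 h4]; try split; lia.
    rewrite /=; ring.
  have [-> -> ->] : [/\ gg (2 * m) tp = 2, gg (2 * m) ts = 0 & gg (2 * m) t = 1]%N.
    rewrite /gg; case: hP => -[h3 h4]; try split; lia.
  by rewrite /= muln0.
have -> : (s0 == 0%N) = false by apply/eqP; lia.
case: hP => -[h3 h4].
  have [k [-> -> ->]] : exists k, [/\ gg (2 * m) tp = k, gg (2 * m) ts = k.+2 & gg (2 * m) t = k.+1].
    exists (t - 1)%N; rewrite /gg; case: hS => -[h5 h6]; try split; lia.
  rewrite /=; ring.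
have [-> -> ->] : [/\ gg (2 * m) tp = 1, gg (2 * m) ts = 1 & gg (2 * m) t = 0]%N.
  rewrite /gg; case: hS => -[h5 h6]; try split; lia.
by rewrite /= muln0.
Qed.

Lemma sum1 (R : realFieldType) p (F : 'I_p -> R) (P : pred 'I_p) c :
  (forall k, P k = (k == c)) -> \sum_k F k * (P k)%:R = F c.
Proof.
move=> H; rewrite (bigD1 c) //= H eqxx mulr1 big1 ?addr0 // => k hk.
by rewrite H (negbTE hk) mulr0.
Qed.

Lemma sum2 (R : realFieldType) p (F : 'I_p -> R) (P : pred 'I_p) a b : a != b ->
  (forall k, P k = (k == a) || (k == b)) -> \sum_k F k * (P k)%:R = F a + F b.
Proof.
move=> hab H; rewrite (bigD1 a) // (bigD1 b) /=; last by rewrite eq_sym.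
rewrite !H !eqxx orbT /= mulr1 mulr1 addrA big1 ?addr0 // => k /andP[h1 h2].
by rewrite H (negbTE h1) (negbTE h2) mulr0.
Qed.

Definition sR (R : realFieldType) m : R := \sum_(k < (2 * m)%N) ((cd (2 * m)%N 0 k)^2)%:R.

Lemma D_entry (R : realFieldType) m (i j : 'I_(2 * m)%N) :
  DeltaC R (2 * m)%N i j = ((cd (2 * m)%N i j)^2)%:R.
Proof. by rewrite mxE gdist_cycle. Qed.

Lemma x_entry (R : realFieldType) m (i : 'I_(2 * m)%N) j :
  xU R (2 * m)%N i j = (((cd (2 * m)%N 0 i).+1)^2)%:R.
Proof. by rewrite mxE gdist_U. Qed.

Lemma rowsumD (R : realFieldType) m (i : 'I_(2 * m)%N) :
  \sum_(k < (2 * m)%N) ((cd (2 * m)%N i k)^2)%:R = sR R m.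
Proof. exact: (rowsum_const (fun d => ((d ^ 2)%N)%:R : R) i). Qed.

Lemma sR_pos (R : realFieldType) m : (0 < m)%N -> 0 < sR R m.
Proof.
move=> hm; have hmo : (m < 2 * m)%N by lia.
rewrite /sR (bigD1 (Ordinal hmo)) //=.
have -> : cd (2 * m)%N 0 m = m by rewrite /cd; lia.
have h1 : 0 < ((m ^ 2)%N)%:R :> R by rewrite ltr0n; lia.
have h2 : 0 <= \sum_(i < (2 * m)%N | i != Ordinal hmo) ((cd (2 * m)%N 0 i ^ 2)%N)%:R :> R.
  by apply: sumr_ge0 => k _; apply: ler0n.
lra.
Qed.

Definition Bm (R : realFieldType) m : 'M[R]_(2 * m)%N := \matrix_(k, j)
  ((2 / sR R m - (cd (2 * m)%N k j == m.-1)%:R + 2 * (cd (2 * m)%N k j == m)%:R) / (4 * m)%:R).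

Lemma DB (R : realFieldType) m : (2 <= m)%N -> DeltaC R (2 * m)%N *m Bm R m = 1%:M.
Proof.
move=> hm; apply/matrixP => i j; rewrite !mxE.
set F := fun k : 'I_(2 * m)%N => ((cd (2 * m)%N i k)^2)%:R : R.
set s := sR R m.
have hs : s != 0 by rewrite gt_eqF // sR_pos //; lia.
have h4 : (4 * m)%:R != 0 :> R by rewrite pnatr_eq0; lia.
under eq_bigr => k _ do rewrite D_entry mxE.
have E : forall k, F k * ((2 / s - (cd (2 * m)%N k j == m.-1)%:R + 2 * (cd (2 * m)%N k j == m)%:R) / (4 * m)%:R)
   = (F k * (2 / s) - F k * (cd (2 * m)%N k j == m.-1)%:R + 2 * (F k * (cd (2 * m)%N k j == m)%:R)) / (4 * m)%:R.
  by move=> k; ring.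
rewrite (eq_bigr _ (fun k _ => E k)) -mulr_suml big_split /= sumrB -mulr_suml -mulr_sumr.
rewrite rowsumD.
rewrite (sum2 (fun k => F k) (P := fun k => cd (2 * m)%N k j == m.-1) (predS_neq (ant j) hm)); last first.
  by move=> k; rewrite char_m1.
rewrite (sum1 (fun k => F k) (P := fun k => cd (2 * m)%N k j == m) (c := ant j)); last first.
  by move=> k; rewrite char_m //; lia.
have K := congr1 (fun n => n%:R : R) (key i j hm).
rewrite !natrD !natrM in K.
rewrite /F -/s !natrX.
set a := (cd _ i (ord_pred _))%:R in K *; set b := (cd _ i (ordS _))%:R in K *.
set c := (cd _ i (ant j))%:R in K *; set e := (i == j)%:R in K *.
have K2 : a ^+ 2 + b ^+ 2 = 2 + 2 * c ^+ 2 - 4 * m%:R * e by rewrite !expr2; lra.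
rewrite K2; move: h4; rewrite natrM => h4.
field; rewrite hs andbT pnatr_eq0; lia.
Qed.

Unset Implicit Arguments.
Theorem lemma6p2 (R : realFieldType) (m : nat) (hm : (2 <= m)%N) :
  DeltaC R (2 * m) \in unitmx /\
  0 < ((xU R (2 * m))^T *m invmx (DeltaC R (2 * m)) *m xU R (2 * m)) ord0 ord0.
Proof.
have hU := (mulmx1_unit (DB R hm)).1.
split => //.
have h0 : (0 < 2 * m)%N by lia.
have hmo : (m < 2 * m)%N by lia.
pose z : 'I_(2 * m)%N := Ordinal h0.
pose mo : 'I_(2 * m)%N := Ordinal hmo.
set s := sR R m.
have hs : 0 < s by rewrite sR_pos //; lia.
have hm0 : m%:R != 0 :> R by rewrite pnatr_eq0; lia.
pose a : R := 1 + m%:R^-1.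
pose b : R := - m%:R^-1.
pose q : R := (m.+1)%:R / s.
pose y : 'cV[R]_(2 * m)%N := \col_k (a * (k == z)%:R + b * (k == mo)%:R + q).
have Hy : DeltaC R (2 * m)%N *m y = xU R (2 * m)%N.
  apply/matrixP => i j; rewrite x_entry !mxE.
  under eq_bigr => k _ do rewrite D_entry mxE.
  set F := fun k : 'I_(2 * m)%N => ((cd (2 * m)%N i k)^2)%:R : R.
  have E : forall k, F k * (a * (k == z)%:R + b * (k == mo)%:R + q)
     = a * (F k * (k == z)%:R) + b * (F k * (k == mo)%:R) + F k * q by move=> k; ring.
  rewrite (eq_bigr _ (fun k _ => E k)) !big_split /= -!mulr_sumr -mulr_suml rowsumD.
  rewrite (sum1 F (P := fun k => k == z) (c := z)) // (sum1 F (P := fun k => k == mo) (c := mo)) //.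
  rewrite /F -/s.
  have e1 : cd (2 * m)%N i z = cd (2 * m)%N 0 i by rewrite /= cd_sym.
  have e2 : cd (2 * m)%N i mo = (m - cd (2 * m)%N 0 i)%N by rewrite /= /cd; have := ltn_ord i; lia.
  have e3 : (cd (2 * m)%N 0 i <= m)%N by rewrite /cd; lia.
  rewrite e1 e2 !natrX natrB // -natr1.
  set d := (cd _ 0 i)%:R.
  rewrite /a /b /q; field.
  by rewrite hm0 gt_eqF.
rewrite -mulmxA.
have -> : invmx (DeltaC R (2 * m)%N) *m xU R (2 * m)%N = y by rewrite -Hy mulKmx.
rewrite mxE.
under eq_bigr => k _ do rewrite mxE x_entry mxE.
set X := fun k : 'I_(2 * m)%N => (((cd (2 * m)%N 0 k).+1 ^ 2)%N)%:R : R.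
have E : forall k, X k * (a * (k == z)%:R + b * (k == mo)%:R + q)
   = a * (X k * (k == z)%:R) + b * (X k * (k == mo)%:R) + X k * q by move=> k; ring.
rewrite (eq_bigr _ (fun k _ => E k)) !big_split /= -!mulr_sumr -mulr_suml.
rewrite (sum1 X (P := fun k => k == z) (c := z)) // (sum1 X (P := fun k => k == mo) (c := mo)) //.
set sig := \sum_k X k.
have Xz : X z = 1.
  rewrite /X /=; have -> : cd (2 * m)%N 0 0 = 0%N by rewrite /cd; lia.
  by rewrite exp1n.
have Xmo : X mo = ((m.+1)%:R)^+2 by rewrite /X /= -natrX; congr (_%:R); congr (_ ^ 2)%N; rewrite /cd; lia.
have hsig : s < sig.
  have -> : sig = s + \sum_(k < (2 * m)%N) ((2 * cd (2 * m)%N 0 k).+1)%:R.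
    rewrite /sig /s /sR -big_split; apply: eq_bigr => k _; rewrite /X /= -natrD; congr (_%:R); nia.
  rewrite ltrDl (bigD1 z) //=.
  have : 0 < ((2 * cd (2 * m)%N 0 0).+1)%:R :> R by rewrite ltr0n.
  have : 0 <= \sum_(i < (2 * m)%N | i != z) ((2 * cd (2 * m)%N 0 i).+1)%:R :> R.
    by apply: sumr_ge0 => k _; apply: ler0n.
  lra.
rewrite Xz Xmo.
have -> : a * 1 + b * (m.+1)%:R ^+ 2 + sig * q = (m.+1)%:R * (sig - s) / s.
  rewrite /a /b /q -natr1; field.
  by rewrite hm0 gt_eqF.
apply: divr_gt0 => //; apply: mulr_gt0; [by rewrite ltr0n | by rewrite subr_gt0].
Qed.
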